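(* Let $N, D \ge 1$, let $X \in \mathbb{R}^{N\times D}$ have rows $x_1,\ldots,x_N$, and let $\lambda^2 > 0$, $\rho^2 > 0$. For $\sigma^2 > 0$ set $\gamma = \exp(-\lambda^2/(2\sigma^2))$ and, for a feature allocation $(K^+, Z)$ and feature means $A \in \mathbb{R}^{K^+ \times D}$ (rows $\mu_1,\ldots,\mu_{K^+}$), define $$p(X,Z,A) = \frac{1}{(2\pi\sigma^2)^{ND/2}} \exp\Big\{-\frac{\operatorname{tr}((X-ZA)'(X-ZA))}{2\sigma^2}\Big\} \cdot \frac{\gamma^{K^+}\exp\{-\sum_{n=1}^N \gamma/n\}}{\prod_{h=1}^H \tilde K_h!} \prod_{k=1}^{K^+} S_{N,k}^{-1}\binom{N}{S_{N,k}}^{-1} \cdot \prod_{k=1}^{K^+} \mathcal{N}(\mu_k \mid 0, \rho^2 I_D).$$ Then for fixed $K^+, Z, A$, as $\sigma^2 \to 0$, $$-2\sigma^2 \log p(X,Z,A) \sim \operatorname{tr}\big[(X-ZA)'(X-ZA)\big] + K^+ \lambda^2,$$ and consequently finding the MAP estimate of $(K^+, Z, A)$ is asymptotically equivalent to solving $\operatorname{argmin}_{K^+, Z, A} \operatorname{tr}[(X-ZA)'(X-ZA)] + K^+\lambda^2$.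
   Context: A feature allocation consists of an integer $K^+ \ge 0$ and a binary matrix $Z = (z_{nk}) \in \{0,1\}^{N \times K^+}$ each of whose columns is nonzero (a data index may belong to any number of features, including none). $S_{N,k} = \sum_n z_{nk}$; $H$ is the number of distinct column vectors among the columns of $Z$, and $\tilde K_h$ is the number of columns equal to the $h$-th distinct column. The middle factor is the Indian buffet process probability of $Z$ with mass parameter $\gamma$. $\mathcal{N}(\cdot\mid m,\Sigma)$ is the Gaussian density. $f(\sigma^2)\sim g(\sigma^2)$ means $f(\sigma^2)/g(\sigma^2)\to 1$ as $\sigma^2 \to 0$. *)

(* Defs.v *)
From HB Require Import structures.
From mathcomp Require Import all_boot all_order all_algebra.
From mathcomp Require Import all_classical all_reals all_analysis.
Set Implicit Arguments. Unset Strict Implicit. Unset Printing Implicit Defensive.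
Import Order.TTheory GRing.Theory Num.Theory.
Import numFieldNormedType.Exports.
Local Open Scope ring_scope.

Section FA.
Variable R : realType.

Definition feature_allocation (N K : nat) (Z : 'M[bool]_(N, K)) : Prop :=
  forall k : 'I_K, exists n : 'I_N, Z n k = true.

Definition Zreal (N K : nat) (Z : 'M[bool]_(N, K)) : 'M[R]_(N, K) :=
  map_mx (fun b : bool => (b : nat)%:R) Z.

Definition Scount (N K : nat) (Z : 'M[bool]_(N, K)) (k : 'I_K) : nat :=
  (\sum_(n < N) (Z n k : nat))%N.

(* prod_{h=1}^H tilde K_h ! : over the distinct columns of Z,
   the factorial of the multiplicity of each *)
Definition col_mult_fact (N K : nat) (Z : 'M[bool]_(N, K)) : nat :=
  let cols := [seq col k Z | k <- enum 'I_K] in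
  (\prod_(c <- undup cols) (count_mem c cols)`!)%N.

Definition sq_err (N D K : nat) (X : 'M[R]_(N, D)) (Z : 'M[bool]_(N, K))
    (A : 'M[R]_(K, D)) : R :=
  \tr ((X - Zreal Z *m A)^T *m (X - Zreal Z *m A)).

Definition lik (N D K : nat) (s2 : R) (X : 'M[R]_(N, D)) (Z : 'M[bool]_(N, K))
    (A : 'M[R]_(K, D)) : R :=
  (2 * pi * s2) `^ (- ((N * D)%:R / 2)) * expR (- sq_err X Z A / (2 * s2)).

Definition ibp_prob (N K : nat) (gam : R) (Z : 'M[bool]_(N, K)) : R :=
  gam ^+ K * expR (- \sum_(n < N) gam / (n.+1)%:R) / (col_mult_fact Z)%:R
  * \prod_(k < K) ((Scount Z k)%:R^-1 * ('C(N, Scount Z k))%:R^-1).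

Definition gauss0 (D : nat) (rho2 : R) (mu : 'rV[R]_D) : R :=
  (2 * pi * rho2) `^ (- (D%:R / 2))
  * expR (- (\sum_(d < D) mu 0 d ^+ 2) / (2 * rho2)).

Definition joint (N D K : nat) (lam2 rho2 s2 : R) (X : 'M[R]_(N, D))
    (Z : 'M[bool]_(N, K)) (A : 'M[R]_(K, D)) : R :=
  lik s2 X Z A * ibp_prob (expR (- lam2 / (2 * s2))) Z
  * \prod_(k < K) gauss0 rho2 (row k A).

End FA.

(* Main.v *)
Require Import Defs.
From HB Require Import structures.
From mathcomp Require Import all_boot all_order all_algebra.
From mathcomp Require Import all_classical all_reals all_analysis.
From mathcomp Require Import ring lra.
Import Order.TTheory GRing.Theory Num.Theory.
Import numFieldNormedType.Exports.
Local Open Scope classical_set_scope.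
Local Open Scope ring_scope.

Lemma xlnx0 (R : realType) : (x * ln x) @[x --> (0:R)^'+] --> (0:R).
Proof.
apply: (@squeeze_cvgr _ _ _ _ (fun x => -2 * Num.sqrt x) (fun _ => 0)).
- near=> x.
  have x0 : 0 < x by near: x; exact: nbhs_right_gt.
  have x1 : x < 1 by near: x; exact: nbhs_right_lt.
  apply/andP; split; last first.
    apply: mulr_ge0_le0; first exact: ltW.
    by rewrite ln_le0 // ltW.
  set y := Num.sqrt x.
  have y0 : 0 < y by rewrite sqrtr_gt0.
  have xy : x = y ^+ 2 by rewrite sqr_sqrtr// ltW.
  have hl : - y^-1 < ln y.
    have := @ln_sublinear _ y^-1; rewrite invr_gt0 y0 => /(_ isT); rewrite lnV ?posrE//.
    by rewrite ltrNl.
  rewrite xy lnXn//.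
  have : - 2 * y <= y ^+ 2 * (ln y *+ 2).
    have e : y ^+ 2 * (- y^-1) = - y.
      by rewrite expr2 mulrN -mulrA mulfV ?gt_eqF// mulr1.
    have : y ^+ 2 * (- y^-1) <= y ^+ 2 * ln y by rewrite ler_pM2l ?exprn_gt0// ltW.
    rewrite e => h.
    have -> : y^+2 * (ln y *+ 2) = 2 * (y^+2 * ln y) by rewrite -mulr_natl; ring.
    lra.
  by [].
- have := @sqrt_continuous R 0.
  move=> h.
  apply: cvg_at_right_filter.
  have h2 : (fun x => -2 * Num.sqrt x) x @[x --> (0:R)] --> -2 * Num.sqrt 0.
    by apply: cvgMr.
  by rewrite sqrtr0 mulr0 in h2.
- exact: cvg_cst.
Unshelve. all: by end_near.
Qed.

Theorem mainTheorem3 (R : realType) (N D : nat) (hN : (0 < N)%N) (hD : (0 < D)%N)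
    (X : 'M[R]_(N, D)) (lam2 rho2 : R) (hlam : 0 < lam2) (hrho : 0 < rho2)
    (K : nat) (Z : 'M[bool]_(N, K)) (hZ : feature_allocation Z) (A : 'M[R]_(K, D))
    (hnz : sq_err X Z A + K%:R * lam2 != 0) :
  (- 2 * s2 * ln (joint lam2 rho2 s2 X Z A)) / (sq_err X Z A + K%:R * lam2)
    @[s2 --> (0 : R)^'+] --> (1 : R).
Proof.
set E := sq_err X Z A.
set C := E + K%:R * lam2.
set P := \prod_(k < K) ((Scount Z k)%:R^-1 * ('C(N, Scount Z k))%:R^-1 : R).
set G := \prod_(k < K) gauss0 rho2 (row k A).
set cm : R := (col_mult_fact Z)%:R.
set S := fun s : R => \sum_(n < N) expR (- lam2 / (2 * s)) / (n.+1)%:R.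
set nd : R := (N * D)%:R.
set B := ln cm^-1 + ln P + ln G.
have hP : 0 < P.
  apply: prodr_gt0 => k _; apply: mulr_gt0; rewrite invr_gt0 ltr0n.
    have [n hn] := hZ k.
    rewrite /Scount (bigD1 n) //= hn; by [].
  rewrite bin_gt0 /Scount.
  rewrite -[X in (_ <= X)%N](card_ord N) -sum1_card.
  by apply: leq_sum => n _; case: (Z n k).
have hG : 0 < G.
  apply: prodr_gt0 => k _; rewrite /gauss0; apply: mulr_gt0; last exact: expR_gt0.
  apply: powR_gt0; apply: mulr_gt0 => //; apply: mulr_gt0 => //; exact: pi_gt0.
have hcm : 0 < cm by rewrite ltr0n /col_mult_fact; apply: prodn_gt0 => c; exact: fact_gt0.
have key : forall s, 0 < s -> ln (joint lam2 rho2 s X Z A) =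
   - (nd / 2) * (ln (2 * pi) + ln s) - E / (2 * s) + K%:R * (- lam2 / (2 * s)) - S s + B.
  move=> s s0.
  rewrite /joint /ibp_prob /lik -/E -/P -/G -/cm.
  have pa : 0 < 2 * pi * s by rewrite !mulr_gt0 ?pi_gt0.
  rewrite !lnM ?posrE ?mulr_gt0 ?powR_gt0 ?expR_gt0 ?exprn_gt0 ?invr_gt0 //.
  rewrite ln_powR lnM ?posrE ?mulr_gt0 ?pi_gt0 // !expRK lnXn ?expR_gt0 // expRK lnV ?posrE //.
  - rewrite /B /S /nd lnV ?posrE // -(mulr_natl (- lam2 / (2*s)) K) [ln (2 * pi)]lnM ?posrE ?pi_gt0 //; ring.
  all: try exact: expR_gt0. exact: (pi_gt0 R).
have hC : C != 0 by exact: hnz.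
clearbody E.
set c1 := nd * ln (2 * pi) - 2 * B.
suff H : (fun s => 1 + (s * c1 + nd * (s * ln s) + 2 * (s * S s)) / C) x @[x --> (0:R)^'+] --> (1:R).
  apply: cvg_trans H; apply: near_eq_cvg; near=> s.
  have s0 : 0 < s by near: s; exact: nbhs_right_gt.
  apply/esym.
  rewrite key //= /c1 /C; field.
  by apply/andP; split; [exact: hC | rewrite gt_eqF].
have hid : (fun s : R => s) x @[x --> (0:R)^'+] --> (0:R) by apply: cvg_at_right_filter; exact: cvg_id.
have hS : (fun s => s * S s) x @[x --> (0:R)^'+] --> (0:R).
  apply: (@squeeze_cvgr _ _ _ _ (fun _ => 0) (fun s => s * N%:R)).
  - near=> t.
    have t0 : 0 < t by near: t; exact: nbhs_right_gt.
    apply/andP; split.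
      apply: mulr_ge0; first exact: ltW.
      by apply: sumr_ge0 => n _; rewrite divr_ge0 ?expR_ge0.
    rewrite ler_pM2l //.
    have -> : (N%:R : R) = \sum_(n < N) (1:R) by rewrite sumr_const card_ord.
    apply: ler_sum => n _; rewrite ler_pdivrMr ?ltr0n // mul1r.
    apply: (le_trans (y := 1)); first by rewrite expR_le1 mulNr oppr_le0 divr_ge0 ?ltW ?mulr_gt0.
    by rewrite ler1n.
  - exact: cvg_cst.
  - have h := @cvgMl _ _ _ _ _ _ N%:R hid; move: h => /(_ (at_right_proper_filter 0)) h; rewrite mul0r in h; exact: h.
have h1 := @cvgMl _ _ _ _ _ _ c1 hid; move: h1 => /(_ (at_right_proper_filter 0)) h1; rewrite mul0r in h1.
have h2 := @cvgMr _ _ _ _ _ nd _ (xlnx0 R); move: h2 => /(_ (at_right_proper_filter 0)) h2; rewrite mulr0 in h2.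
have h3 := @cvgMr _ _ _ _ _ 2 _ hS; move: h3 => /(_ (at_right_proper_filter 0)) h3; rewrite mulr0 in h3.
have h4' := cvgD h1 h2; move: h4' => /(_ (at_right_proper_filter 0)) h4'.
have h4 := cvgD h4' h3; move: h4 => /(_ (at_right_proper_filter 0)) h4; rewrite !addr0 in h4.
have h5 := @cvgMl _ _ _ _ _ _ C^-1 h4; move: h5 => /(_ (at_right_proper_filter 0)) h5; rewrite mul0r in h5.
have h6 := cvgD (cvg_cst (1:R)) h5; move: h6 => /(_ (at_right_proper_filter 0)) h6; rewrite addr0 in h6.
exact: h6.
Unshelve. all: by end_near.
Qed.
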